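(* Let $\mathbf L$ be an algebraic lattice and let $\eta:L\to L$ satisfy: (I1) $\eta(x)\le x$; (I2) $x\ge y$ implies $\eta(x)\ge\eta(y)$; (I3) $\eta^2(x)=\eta(x)$; (I4) $\eta(1)=1$; (I5) if $\eta(x)=u$ for all $x\in X\subseteq L$ then $\eta(\bigvee X)=u$. Define $\tau(x)=\bigvee\{z\in L:\eta(z)=\eta(x)\}$. Then for any subset $\{x_j:j\in J\}\subseteq L$, \[ \tau\Big(\bigwedge_{j\in J}x_j\Big)\ \ge\ \bigwedge_{j\in J}\tau(x_j). \] *)

(* Defs.v *)
From Stdlib Require Import List.

Record complete_lattice := CompleteLattice {
  carrier :> Type;
  le : carrier -> carrier -> Prop;
  le_refl : forall x, le x x;
  le_trans : forall x y z, le x y -> le y z -> le x z;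
  le_antisym : forall x y, le x y -> le y x -> x = y;
  sup : (carrier -> Prop) -> carrier;
  sup_ub : forall (A : carrier -> Prop) x, A x -> le x (sup A);
  sup_least : forall (A : carrier -> Prop) y,
      (forall x, A x -> le x y) -> le (sup A) y
}.

Arguments le {c} _ _.
Arguments sup {c} _.

Definition inf {L : complete_lattice} (A : L -> Prop) : L :=
  sup (fun y => forall x, A x -> le y x).

Definition top {L : complete_lattice} : L := sup (fun _ => True).

Definition compact {L : complete_lattice} (c : L) : Prop :=
  forall A : L -> Prop, le c (sup A) ->
    exists s : list L, (forall x, In x s -> A x) /\ le c (sup (fun x => In x s)).

Definition algebraic (L : complete_lattice) : Prop :=
  forall x : L, x = sup (fun c => compact c /\ le c x).

Definition tau {L : complete_lattice} (eta : L -> L) (x : L) : L :=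
  sup (fun z => eta z = eta x).

(* Main.v *)
Require Import Defs.

Lemma inf_lb (L : complete_lattice) (A : L -> Prop) a : A a -> le (inf A) a.
Proof. intro Ha. unfold inf. apply sup_least. intros y Hy. apply Hy, Ha. Qed.

Lemma inf_glb (L : complete_lattice) (A : L -> Prop) y :
  (forall a, A a -> le y a) -> le y (inf A).
Proof. intro H. unfold inf. apply (sup_ub L (fun y => forall x, A x -> le y x)). exact H. Qed.

Theorem lemma5p3 (L : complete_lattice) (HL : algebraic L) (eta : L -> L)
  (I1 : forall x, le (eta x) x)
  (I2 : forall x y, le y x -> le (eta y) (eta x))
  (I3 : forall x, eta (eta x) = eta x)
  (I4 : eta top = top)
  (I5 : forall (X : L -> Prop) (u : L), (exists x, X x) ->
          (forall x, X x -> eta x = u) -> eta (sup X) = u)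
  (J : Type) (x : J -> L) :
  le (inf (fun y => exists j, y = tau eta (x j)))
     (tau eta (inf (fun y => exists j, y = x j))).
Proof.
  pose (m := inf (fun y => exists j, y = tau eta (x j))).
  pose (w := inf (fun y => exists j, y = x j)).
  assert (Htau : forall a, eta (tau eta a) = eta a).
  { intro a. unfold tau. apply I5. exists a. reflexivity. intros z Hz; exact Hz. }
  assert (Hxt : forall a, le a (tau eta a)).
  { intro a. unfold tau. apply (sup_ub L (fun z => eta z = eta a)). reflexivity. }
  assert (Hwm : le w m).
  { apply inf_glb. intros a [j ->]. apply le_trans with (x j).
    apply inf_lb. exists j; reflexivity. apply Hxt. }
  assert (Hmw : le (eta m) w).
  { apply inf_glb. intros a [j ->].
    apply le_trans with (eta (tau eta (x j))).
    apply I2. apply inf_lb. exists j; reflexivity.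
    rewrite Htau. apply I1. }
  assert (E : eta m = eta w).
  { apply le_antisym.
    - rewrite <- I3. apply I2. exact Hmw.
    - apply I2. exact Hwm. }
  unfold tau. apply (sup_ub L (fun z => eta z = eta w)). exact E.
Qed.
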